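(* For a monopoly SP, the optimal revenue-maximizing and social welfare-maximizing bandwidth allocation strategies are the same and are determined by the following cases: 1. If $B_S^0\le \frac{N_f\lambda_S^{1/\alpha-1}B}{N_f\lambda_S^{1/\alpha-1}+N_m}$, the optimal bandwidth allocation remains the same as that without the regulatory constraint, namely $B_S^{\text{SW}}=B_S^{\text{rev}}=\frac{N_f\lambda_S^{1/\alpha-1}B}{N_f\lambda_S^{1/\alpha-1}+N_m}$ and $B_M^{\text{SW}}=B_M^{\text{rev}}=\frac{N_m B}{N_f\lambda_S^{1/\alpha-1}+N_m}$. 2. If $B_S^0> \frac{N_f\lambda_S^{1/\alpha-1}B}{N_f\lambda_S^{1/\alpha-1}+N_m}$, the optimal bandwidth allocation is $B_S^{\text{SW}}=B_S^{\text{rev}}=B_S^0$, $B_M^{\text{SW}}=B_M^{\text{rev}}=B-B_S^0$, and consequently there is both a welfare and a revenue loss (relative to the unconstrained case). In both cases the optimal macro- and small-cell service prices are market-clearing prices, i.e., prices that equalize total rate demand and total rate supply in both cells.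
   Context: A single service provider (SP) has total licensed bandwidth $B$, which it splits into macro-cell bandwidth $B_M$ and small-cell bandwidth $B_S$ subject to $B_M+B_S\le B$, $B_M\ge 0$, and the regulatory constraint $B_S\ge B_S^0$ (a required minimum small-cell bandwidth). Macro-cells provide total rate $C_M=B_M R_0$ and small-cells provide total rate $C_S=\lambda_S B_S R_0$, where $R_0$ is the macro-cell spectral efficiency and $\lambda_S>1$. There are mobile users of density $N_m$, who can only associate with macro-cells (and have priority there), and fixed users of density $N_f$, who can associate with either macro- or small-cells (but not both). Every user has utility $u(r)=r^{1-\alpha}/(1-\alpha)$ with $\alpha\in(0,1)$, and given a price $p$ per unit rate chooses rate $D(p)=(1/p)^{1/\alpha}$. The SP charges prices $p_M,p_S\in(0,\infty)$ per unit rate for macro- and small-cell service; users pick the cheapest service and fill its capacity (splitting proportionally to capacities under ties, with leftover demand spilling over). With $K_M,K_S$ the masses of users associated with macro- and small-cells, the SP's revenue is $p_M K_M D(p_M)+p_S K_S D(p_S)$ and social welfare is $K_M u(D(p_M))+K_S u(D(p_S))$. The SP first chooses the bandwidth split, then prices. $B_S^{\text{SW}},B_M^{\text{SW}}$ denote the welfare-maximizing allocation and $B_S^{\text{rev}},B_M^{\text{rev}}$ the revenue-maximizing allocation. *)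

(* Defs.v *)
From Stdlib Require Import Reals Lra.
Open Scope R_scope.

Definition demand (alpha p : R) : R := Rpower (/ p) (/ alpha).

Definition util (alpha r : R) : R := Rpower r (1 - alpha) / (1 - alpha).

Definition capM (R0 BM : R) : R := BM * R0.
Definition capS (R0 lam BS : R) : R := lam * BS * R0.

(* Users pick the cheaper service and fill its capacity; leftover demand spills
   over to the other service (fixed users only); mobile users can only use
   macro-cells and have priority there.  Under a tie, fixed users split
   proportionally to capacities, then spill over. *)
Definition assoc (Nm Nf alpha cM cS pM pS : R) : R * R :=
  let DM := demand alpha pM in
  let DS := demand alpha pS in
  if Rlt_dec pM pS then
    let m := Rmin Nm (cM / DM) in
    let f := Rmin Nf (cM / DM - m) in
    (m + f, Rmin (Nf - f) (cS / DS))
  else if Rlt_dec pS pM then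
    let s := Rmin Nf (cS / DS) in
    (Rmin (Nm + (Nf - s)) (cM / DM), s)
  else
    let th := cS / (cM + cS) in
    let a := th * Nf in
    let b := (1 - th) * Nf in
    let s1 := Rmin a (cS / DS) in
    let m := Rmin Nm (cM / DM) in
    let f1 := Rmin b (cM / DM - m) in
    let f2 := Rmin (a - s1) (cM / DM - m - f1) in
    let s2 := Rmin (b - f1) (cS / DS - s1) in
    (m + f1 + f2, s1 + s2).

Definition KM (R0 lam Nm Nf alpha BM BS pM pS : R) : R :=
  fst (assoc Nm Nf alpha (capM R0 BM) (capS R0 lam BS) pM pS).
Definition KS (R0 lam Nm Nf alpha BM BS pM pS : R) : R :=
  snd (assoc Nm Nf alpha (capM R0 BM) (capS R0 lam BS) pM pS).

Definition revenue (R0 lam Nm Nf alpha BM BS pM pS : R) : R :=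
  pM * KM R0 lam Nm Nf alpha BM BS pM pS * demand alpha pM
  + pS * KS R0 lam Nm Nf alpha BM BS pM pS * demand alpha pS.

Definition welfare (R0 lam Nm Nf alpha BM BS pM pS : R) : R :=
  KM R0 lam Nm Nf alpha BM BS pM pS * util alpha (demand alpha pM)
  + KS R0 lam Nm Nf alpha BM BS pM pS * util alpha (demand alpha pS).

Definition feasible (B BS0 BM BS : R) : Prop :=
  0 <= BM /\ BS0 <= BS /\ BM + BS <= B.

Definition market_clearing (R0 lam Nm Nf alpha BM BS pM pS : R) : Prop :=
  KM R0 lam Nm Nf alpha BM BS pM pS * demand alpha pM = capM R0 BM /\
  KS R0 lam Nm Nf alpha BM BS pM pS * demand alpha pS = capS R0 lam BS /\
  KM R0 lam Nm Nf alpha BM BS pM pS + KS R0 lam Nm Nf alpha BM BS pM pS = Nm + Nf.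

(* (bm, bs) is THE optimal allocation for objective obj (SP chooses bandwidth,
   then prices): it is feasible, together with some market-clearing prices it
   attains the maximum over all feasible allocations and positive prices, and
   every maximizer has allocation (bm, bs) and market-clearing prices. *)
Definition optimal_alloc (obj : R -> R -> R -> R -> R)
    (B BS0 R0 lam Nm Nf alpha bm bs : R) : Prop :=
  (feasible B BS0 bm bs /\
   exists pm ps, 0 < pm /\ 0 < ps /\
     market_clearing R0 lam Nm Nf alpha bm bs pm ps /\
     forall bm' bs' pm' ps', feasible B BS0 bm' bs' -> 0 < pm' -> 0 < ps' ->
       obj bm' bs' pm' ps' <= obj bm bs pm ps) /\
  (forall bm1 bs1 pm1 ps1, feasible B BS0 bm1 bs1 -> 0 < pm1 -> 0 < ps1 ->
     (forall bm' bs' pm' ps', feasible B BS0 bm' bs' -> 0 < pm' -> 0 < ps' ->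
        obj bm' bs' pm' ps' <= obj bm1 bs1 pm1 ps1) ->
     bm1 = bm /\ bs1 = bs /\ market_clearing R0 lam Nm Nf alpha bm1 bs1 pm1 ps1).

(* Strict loss w.r.t. the unconstrained problem (BS0 replaced by 0): some
   unconstrained-feasible choice beats every constrained-feasible choice. *)
Definition strict_loss (obj : R -> R -> R -> R -> R) (B BS0 : R) : Prop :=
  exists bm bs pm ps, feasible B 0 bm bs /\ 0 < pm /\ 0 < ps /\
    forall bm' bs' pm' ps', feasible B BS0 bm' bs' -> 0 < pm' -> 0 < ps' ->
      obj bm' bs' pm' ps' < obj bm bs pm ps.

(* Main.v *)
Require Import Defs.
From Stdlib Require Import Reals Lra Psatz.
Open Scope R_scope.

Lemma exp_ge1 x : 1 + x <= exp x.
Proof. destruct (Req_dec x 0) as [->|h]. rewrite exp_0; lra. left; apply exp_ineq1; auto. Qed.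

Lemma key_ineq a u : 0 < a < 1 ->
  exp ((1-a)*u) <= (1-a) * exp u + a /\ (u <> 0 -> exp ((1-a)*u) < (1-a) * exp u + a).
Proof.
  intros Ha.
  set (A := exp ((1-a)*u)).
  assert (HA : 0 < A) by apply exp_pos.
  assert (E1 : exp u = A * exp (a*u)) by (unfold A; rewrite <- exp_plus; f_equal; ring).
  assert (E2 : 1 = A * exp (-(1-a)*u)) by (unfold A; rewrite <- exp_plus, <- exp_0; f_equal; ring).
  pose proof (exp_ge1 (a*u)) as G1. pose proof (exp_ge1 (-(1-a)*u)) as G2.
  split.
  - assert (X: A*((1-a)*exp (a*u)+a*exp(-(1-a)*u)) = (1-a)*exp u + a)
      by (rewrite E1; transitivity ((1-a)*(A*exp(a*u)) + a*(A*exp(-(1-a)*u))); [ring | rewrite <- E2; ring]).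
    rewrite <- X.
    assert (H : A * ((1-a)*(1+a*u) + a*(1+ -(1-a)*u)) <= A * ((1-a)*exp (a*u) + a*exp(-(1-a)*u))).
    { apply Rmult_le_compat_l; [lra|]. nra. }
    replace ((1-a)*(1+a*u) + a*(1+ -(1-a)*u)) with 1 in H by ring. nra.
  - intros Hu. assert (X: A*((1-a)*exp (a*u)+a*exp(-(1-a)*u)) = (1-a)*exp u + a)
      by (rewrite E1; transitivity ((1-a)*(A*exp(a*u)) + a*(A*exp(-(1-a)*u))); [ring | rewrite <- E2; ring]).
    rewrite <- X.
    assert (H : A * ((1-a)*(1+a*u) + a*(1+ -(1-a)*u)) < A * ((1-a)*exp (a*u) + a*exp(-(1-a)*u))).
    { apply Rmult_lt_compat_l; [lra|].
      destruct (Rlt_or_le 0 u).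
      - assert (1 + a*u < exp (a*u)) by (apply exp_ineq1; nra). nra.
      - assert (u < 0) by lra.
        assert (1 + -(1-a)*u < exp (-(1-a)*u)) by (apply exp_ineq1; nra). nra. }
    replace ((1-a)*(1+a*u) + a*(1+ -(1-a)*u)) with 1 in H by ring. nra.
Qed.

Definition nu (a r : R) := exp (-a * ln r).

Lemma tangent a D r : 0 < a < 1 -> 0 < D -> 0 < r ->
  exp ((1-a)*ln D) <= nu a r * ((1-a)*D + a*r) /\
  (D <> r -> exp ((1-a)*ln D) < nu a r * ((1-a)*D + a*r)).
Proof.
  intros Ha HD Hr. unfold nu.
  set (u := ln D - ln r).
  assert (ED : D = exp (ln r) * exp u) by (rewrite <- exp_plus; unfold u; replace (ln r + (ln D - ln r)) with (ln D) by ring; rewrite exp_ln; lra).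
  assert (EL : exp ((1-a)*ln D) = exp ((1-a)*ln r) * exp ((1-a)*u)) by (rewrite <- exp_plus; f_equal; unfold u; ring).
  assert (ER : exp (-a*ln r) * ((1-a)*D + a*r) = exp ((1-a)*ln r) * ((1-a)*exp u + a)).
  { rewrite ED. rewrite (exp_ln r) by lra.
    replace (exp ((1-a)*ln r)) with (exp (-a*ln r) * r).
    - rewrite (exp_ln r) in ED by lra. ring.
    - rewrite <- (exp_ln r) at 2 by lra. rewrite <- exp_plus. f_equal; ring. }
  rewrite EL, ER. destruct (key_ineq a u Ha) as [K1 K2].
  assert (P : 0 < exp ((1-a)*ln r)) by apply exp_pos.
  split.
  - apply Rmult_le_compat_l; lra.
  - intros Hne. apply Rmult_lt_compat_l; [lra|]. apply K2.
    intro Hu. apply Hne. apply ln_inv; try lra. unfold u in Hu; lra.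
Qed.

Lemma demand_pos a p : 0 < demand a p.
Proof. unfold demand, Rpower. apply exp_pos. Qed.

Lemma pD a p : 0 < a -> 0 < p -> p * demand a p = exp ((1-a) * ln (demand a p)).
Proof.
  intros Ha Hp. unfold demand, Rpower. rewrite ln_exp, ln_Rinv by lra.
  rewrite <- (exp_ln p) at 1 by lra. rewrite <- exp_plus. f_equal. field. lra.
Qed.

Lemma util_eq a D : 0 < D -> util a D = exp ((1-a) * ln D) / (1-a).
Proof. intros. unfold util, Rpower. reflexivity. Qed.

Definition price (a r : R) := exp (-a * ln r).

Lemma price_pos a r : 0 < price a r.
Proof. apply exp_pos. Qed.

Lemma demand_price a r : 0 < a -> 0 < r -> demand a (price a r) = r.
Proof.
  intros Ha Hr. unfold demand, price, Rpower.
  rewrite ln_Rinv by apply exp_pos. rewrite ln_exp.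
  replace (/a * - (-a * ln r)) with (ln r) by (field; lra). apply exp_ln; lra.
Qed.

Lemma price_lt a r1 r2 : 0 < a -> 0 < r1 -> r1 < r2 -> price a r2 < price a r1.
Proof.
  intros. unfold price. apply exp_increasing.
  assert (ln r1 < ln r2) by (apply ln_increasing; lra). nra.
Qed.

Lemma cell a p r K C : 0 < a < 1 -> 0 < p -> 0 < r -> 0 <= K -> K * demand a p <= C ->
  p * K * demand a p <= nu a r * ((1-a)*C + a*r*K).
Proof.
  intros Ha Hp Hr HK HC.
  pose proof (demand_pos a p) as HD.
  destruct (tangent a (demand a p) r Ha HD Hr) as [T _].
  replace (p * K * demand a p) with (K * (p * demand a p)) by ring.
  rewrite pD by lra.
  assert (0 < nu a r) by apply exp_pos.
  apply Rle_trans with (K * (nu a r * ((1-a)*demand a p + a*r))).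
  - apply Rmult_le_compat_l; lra.
  - assert (0 <= nu a r * (1-a) * (C - K * demand a p)).
    { apply Rmult_le_pos; [|lra]. apply Rmult_le_pos; lra. }
    nra.
Qed.

Lemma cell_eq a p r K C : 0 < a < 1 -> 0 < p -> 0 < r -> 0 < K -> K * demand a p <= C ->
  p * K * demand a p = nu a r * ((1-a)*C + a*r*K) ->
  demand a p = r /\ K * demand a p = C.
Proof.
  intros Ha Hp Hr HK HC Heq.
  pose proof (demand_pos a p) as HD.
  destruct (tangent a (demand a p) r Ha HD Hr) as [T T2].
  replace (p * K * demand a p) with (K * (p * demand a p)) in Heq by ring.
  rewrite pD in Heq by lra.
  assert (0 < nu a r) by apply exp_pos.
  assert (Hnn : 0 <= nu a r * (1-a) * (C - K * demand a p)).
  { apply Rmult_le_pos; [|lra]. apply Rmult_le_pos; lra. }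
  assert (Hd : demand a p = r).
  { destruct (Req_dec (demand a p) r) as [|Hne]; auto.
    specialize (T2 Hne). exfalso.
    assert (K * exp ((1 - a) * ln (demand a p)) < K * (nu a r * ((1-a)*demand a p + a*r))) by (apply Rmult_lt_compat_l; lra).
    nra. }
  split; auto.
  assert (K * exp ((1 - a) * ln (demand a p)) <= K * (nu a r * ((1-a)*demand a p + a*r))) by (apply Rmult_le_compat_l; lra).
  assert (Z : nu a r * (1-a) * (C - K * demand a p) = 0) by nra.
  assert (Z2 : nu a r * (1-a) <> 0) by (apply Rgt_not_eq; nra).
  apply Rmult_integral in Z. destruct Z; [contradiction|lra].
Qed.

Lemma div_nn x y : 0 <= x -> 0 < y -> 0 <= x / y.
Proof. intros. unfold Rdiv. apply Rmult_le_pos; auto. left; apply Rinv_0_lt_compat; auto. Qed.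

Lemma div_le1 x y : 0 <= x -> x <= y -> 0 < y -> x / y <= 1.
Proof. intros. apply (Rmult_le_reg_r y); auto. unfold Rdiv. rewrite Rmult_assoc, Rinv_l; lra. Qed.

Lemma assoc_props Nm Nf a cM cS pM pS : 0 <= Nm -> 0 <= Nf -> 0 <= cM -> 0 <= cS ->
  let K := assoc Nm Nf a cM cS pM pS in
  0 <= fst K /\ 0 <= snd K /\ fst K * demand a pM <= cM /\ snd K * demand a pS <= cS /\
  snd K <= Nf /\ fst K + snd K <= Nm + Nf.
Proof.
  intros HNm HNf HcM HcS K.
  pose proof (demand_pos a pM) as HDM. pose proof (demand_pos a pS) as HDS.
  assert (EM : forall x, x * demand a pM <= cM <-> x <= cM / demand a pM).
  { intro x. split; intro h.
    - apply (Rmult_le_reg_r (demand a pM)); auto. unfold Rdiv. rewrite Rmult_assoc, Rinv_l; lra.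
    - apply (Rmult_le_compat_r (demand a pM)) in h; [|lra]. unfold Rdiv in h. rewrite Rmult_assoc, Rinv_l in h; lra. }
  assert (ES : forall x, x * demand a pS <= cS <-> x <= cS / demand a pS).
  { intro x. split; intro h.
    - apply (Rmult_le_reg_r (demand a pS)); auto. unfold Rdiv. rewrite Rmult_assoc, Rinv_l; lra.
    - apply (Rmult_le_compat_r (demand a pS)) in h; [|lra]. unfold Rdiv in h. rewrite Rmult_assoc, Rinv_l in h; lra. }
  rewrite EM, ES.
  assert (Hu : 0 <= cM / demand a pM) by (apply div_nn; lra).
  assert (Hv : 0 <= cS / demand a pS) by (apply div_nn; lra).
  assert (Hth : 0 <= cS / (cM + cS) <= 1).
  { destruct (Req_dec (cM + cS) 0) as [h|h].
    - rewrite h, Rdiv_0_r. lra.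
    - split. apply div_nn; lra.
      apply div_le1; lra. }
  unfold K, assoc. cbv zeta.
  generalize dependent (cM / demand a pM). generalize dependent (cS / demand a pS).
  generalize dependent (cS / (cM + cS)).
  intros th Hth v _ Hv u _ Hu.
  destruct (Rlt_dec pM pS); [|destruct (Rlt_dec pS pM)]; simpl;
  unfold Rmin; repeat match goal with |- context [Rle_dec ?x ?y] => destruct (Rle_dec x y) end;
  nra.
Qed.

Lemma nur a r : 0 < r -> nu a r * r = exp ((1-a) * ln r).
Proof. intros. unfold nu. rewrite <- (exp_ln r) at 2 by lra. rewrite <- exp_plus. f_equal; ring. Qed.

Lemma exp_mono_pow a r1 r2 : 0 < a < 1 -> 0 < r1 -> r1 < r2 -> exp ((1-a)*ln r1) < exp ((1-a)*ln r2).
Proof. intros. apply exp_increasing. assert (ln r1 < ln r2) by (apply ln_increasing; lra). nra. Qed.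

Section Core.
Variables (B BS0 R0 lam Nm Nf a bm bs rM rS : R).
Hypotheses (Ha : 0 < a < 1) (HR0 : 0 < R0) (Hlam : 0 < lam) (HNm : 0 < Nm) (HNf : 0 < Nf)
  (Hbm : 0 < bm) (Hbs : 0 < bs) (HB : bm + bs = B) (HBS0 : BS0 <= bs) (HBS00 : 0 <= BS0)
  (ErM : rM * Nm = R0 * bm) (ErS : rS * Nf = lam * R0 * bs)
  (Hr : rM < rS) (Hnu : lam * nu a rS <= nu a rM) (Hcase : nu a rM = lam * nu a rS \/ bs = BS0).

Let V := R0 * (nu a rM * bm + lam * nu a rS * bs).

Lemma rM_pos : 0 < rM.
Proof. assert (0 < R0 * bm) by nra. nra. Qed.
Lemma rS_pos : 0 < rS.
Proof. assert (0 < lam * R0 * bs) by (apply Rmult_lt_0_compat; nra). nra. Qed.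

Lemma bound x y pM pS : feasible B BS0 x y -> 0 < pM -> 0 < pS ->
  revenue R0 lam Nm Nf a x y pM pS <= V /\
  (V <= revenue R0 lam Nm Nf a x y pM pS ->
     x = bm /\ y = bs /\ market_clearing R0 lam Nm Nf a x y pM pS).
Proof.
  intros [Hx [Hy Hxy]] HpM HpS.
  pose proof rM_pos as HrM. pose proof rS_pos as HrS.
  assert (HcM : 0 <= capM R0 x) by (unfold capM; nra).
  assert (HcS : 0 <= capS R0 lam y) by (unfold capS; apply Rmult_le_pos; nra).
  destruct (assoc_props Nm Nf a (capM R0 x) (capS R0 lam y) pM pS ltac:(lra) ltac:(lra) HcM HcS)
    as [K1 [K2 [K3 [K4 [K5 K6]]]]].
  unfold market_clearing, revenue, KM, KS.
  set (kM := fst (assoc Nm Nf a (capM R0 x) (capS R0 lam y) pM pS)) in *.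
  set (kS := snd (assoc Nm Nf a (capM R0 x) (capS R0 lam y) pM pS)) in *.
  pose proof (cell a pM rM kM (capM R0 x) Ha HpM HrM K1 K3) as CM.
  pose proof (cell a pS rS kS (capS R0 lam y) Ha HpS HrS K2 K4) as CS.
  assert (HcMS : nu a rM * rM < nu a rS * rS) by (rewrite !nur by lra; apply exp_mono_pow; lra).
  assert (HnM : 0 < nu a rM) by apply exp_pos.
  assert (HnS : 0 < nu a rS) by apply exp_pos.
  set (cM := nu a rM * rM) in *. set (cS := nu a rS * rS) in *.
  set (nM := nu a rM) in *. set (nS := nu a rS) in *.
  assert (SA : 0 <= nM * bm + lam * nS * bs - (nM * x + lam * nS * y)).
  { destruct Hcase as [E|E].
    - rewrite E. assert (0 <= lam * nS * (B - x - y)) by (apply Rmult_le_pos; [nra|lra]). nra.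
    - assert (0 <= nM * (B - x - y)) by (apply Rmult_le_pos; lra).
      assert (0 <= (nM - lam * nS) * (y - bs)) by (apply Rmult_le_pos; lra). nra. }
  assert (HcM0 : 0 < cM) by (unfold cM; nra).
  assert (SB1 : 0 <= cM * (Nm + Nf - kM - kS)) by (apply Rmult_le_pos; lra).
  assert (SB2 : 0 <= (cS - cM) * (Nf - kS)) by (apply Rmult_le_pos; lra).
  assert (EV : V = (1-a) * R0 * (nM * bm + lam * nS * bs) + a * (cM * Nm + cS * Nf)).
  { unfold V, cM, cS. replace (nM * rM * Nm) with (nM * (rM * Nm)) by ring.
    replace (nS * rS * Nf) with (nS * (rS * Nf)) by ring. rewrite ErM, ErS. unfold nM, nS. ring. }
  unfold capM, capS in CM, CS.
  assert (ID : nM*((1-a)*(x*R0)+a*rM*kM) + nS*((1-a)*(lam*y*R0)+a*rS*kS) =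
      (1-a) * R0 * (nM * x + lam * nS * y) + a * (cM * kM + cS * kS)) by (unfold cM, cS; ring).
  assert (T1 : pM * kM * demand a pM + pS * kS * demand a pS <=
     (1-a) * R0 * (nM * x + lam * nS * y) + a * (cM * kM + cS * kS)).
  { lra. }
  assert (T2 : (1-a) * R0 * (nM * x + lam * nS * y) + a * (cM * kM + cS * kS) <= V).
  { rewrite EV. assert (0 <= (1-a) * R0 * (nM * bm + lam * nS * bs - (nM * x + lam * nS * y))).
    { apply Rmult_le_pos; [nra|lra]. }
    assert (0 <= a * (cM * (Nm + Nf - kM - kS) + (cS - cM) * (Nf - kS))) by (apply Rmult_le_pos; lra).
    nra. }
  split; [lra|].
  intros HV.
  assert (E1 : (1-a) * R0 * (nM * x + lam * nS * y) + a * (cM * kM + cS * kS) = V) by lra.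
  assert (E2 : a * (cM * (Nm + Nf - kM - kS) + (cS - cM) * (Nf - kS)) = 0).
  { rewrite EV in E1. assert (0 <= (1-a) * R0 * (nM * bm + lam * nS * bs - (nM * x + lam * nS * y))).
    { apply Rmult_le_pos; [nra|lra]. }
    assert (0 <= a * (cM * (Nm + Nf - kM - kS) + (cS - cM) * (Nf - kS))) by (apply Rmult_le_pos; lra).
    nra. }
  assert (E3 : cM * (Nm + Nf - kM - kS) + (cS - cM) * (Nf - kS) = 0).
  { apply Rmult_integral in E2. destruct E2; lra. }
  assert (E4 : cM * (Nm + Nf - kM - kS) = 0) by lra.
  assert (E5 : (cS - cM) * (Nf - kS) = 0) by lra.
  assert (HkS : kS = Nf) by (apply Rmult_integral in E5; destruct E5; lra).
  assert (HkM : kM = Nm) by (apply Rmult_integral in E4; destruct E4; lra).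
  assert (EqM : pM * kM * demand a pM = nM * ((1 - a) * (x * R0) + a * rM * kM)) by lra.
  assert (EqS : pS * kS * demand a pS = nS * ((1 - a) * (lam * y * R0) + a * rS * kS)) by lra.
  destruct (cell_eq a pM rM kM (x * R0) Ha HpM HrM ltac:(lra) K3 EqM) as [DM CM'].
  destruct (cell_eq a pS rS kS (lam * y * R0) Ha HpS HrS ltac:(lra) K4 EqS) as [DS CS'].
  rewrite DM, HkM in CM'. rewrite DS, HkS in CS'.
  assert (Hxb : x = bm).
  { apply (Rmult_eq_reg_r R0); [|lra]. lra. }
  assert (Hyb : y = bs).
  { apply (Rmult_eq_reg_r (lam * R0)); [|nra]. lra. }
  unfold capM, capS. rewrite HkM, HkS, DM, DS. lra.
Qed.

Lemma candidate :
  market_clearing R0 lam Nm Nf a bm bs (price a rM) (price a rS) /\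
  revenue R0 lam Nm Nf a bm bs (price a rM) (price a rS) = V.
Proof.
  pose proof rM_pos as HrM. pose proof rS_pos as HrS.
  assert (Hp : price a rS < price a rM) by (apply price_lt; lra).
  assert (EK : assoc Nm Nf a (capM R0 bm) (capS R0 lam bs) (price a rM) (price a rS) = (Nm, Nf)).
  { unfold assoc. cbv zeta. rewrite !demand_price by lra.
    destruct (Rlt_dec (price a rM) (price a rS)) as [h|_]; [lra|].
    destruct (Rlt_dec (price a rS) (price a rM)) as [_|h]; [|lra].
    assert (E1 : capS R0 lam bs / rS = Nf).
    { unfold capS. apply (Rmult_eq_reg_r rS); [|lra]. unfold Rdiv. rewrite Rmult_assoc, Rinv_l by lra. lra. }
    assert (E2 : capM R0 bm / rM = Nm).
    { unfold capM. apply (Rmult_eq_reg_r rM); [|lra]. unfold Rdiv. rewrite Rmult_assoc, Rinv_l by lra. lra. }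
    rewrite E1, E2. unfold Rmin.
    destruct (Rle_dec Nf Nf); [|lra]. replace (Nm + (Nf - Nf)) with Nm by ring.
    destruct (Rle_dec Nm Nm); [|lra]. reflexivity. }
  unfold market_clearing, revenue, KM, KS. rewrite EK. simpl. rewrite !demand_price by lra.
  unfold capM, capS. split; [lra|].
  unfold V, price. fold (nu a rM) (nu a rS).
  replace (nu a rM * Nm * rM) with (nu a rM * (rM * Nm)) by ring.
  replace (nu a rS * Nf * rS) with (nu a rS * (rS * Nf)) by ring.
  rewrite ErM, ErS. ring.
Qed.

Lemma core_opt : optimal_alloc (revenue R0 lam Nm Nf a) B BS0 R0 lam Nm Nf a bm bs.
Proof.
  destruct candidate as [MC EV].
  assert (Hf : feasible B BS0 bm bs) by (unfold feasible; lra).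
  split.
  - split; auto. exists (price a rM), (price a rS).
    split; [apply price_pos|]. split; [apply price_pos|]. split; auto.
    intros. rewrite EV. apply bound; auto.
  - intros bm1 bs1 pm1 ps1 Hf1 Hp1 Hq1 Hmax.
    specialize (Hmax bm bs (price a rM) (price a rS) Hf (price_pos _ _) (price_pos _ _)).
    rewrite EV in Hmax. apply (bound bm1 bs1 pm1 ps1 Hf1 Hp1 Hq1). auto.
Qed.
End Core.

Lemma welfare_rev R0 lam Nm Nf a x y p q : 0 < a < 1 -> 0 < p -> 0 < q ->
  welfare R0 lam Nm Nf a x y p q = revenue R0 lam Nm Nf a x y p q / (1 - a).
Proof.
  intros Ha Hp Hq. unfold welfare, revenue, util, Rpower.
  replace (p * KM R0 lam Nm Nf a x y p q * demand a p) with (KM R0 lam Nm Nf a x y p q * (p * demand a p)) by ring.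
  replace (q * KS R0 lam Nm Nf a x y p q * demand a q) with (KS R0 lam Nm Nf a x y p q * (q * demand a q)) by ring.
  rewrite !pD by lra. field. lra.
Qed.

Lemma transfer (obj obj2 : R -> R -> R -> R -> R) c B BS0 R0 lam Nm Nf a bm bs : 0 < c ->
  (forall x y p q, 0 < p -> 0 < q -> obj2 x y p q = obj x y p q / c) ->
  optimal_alloc obj B BS0 R0 lam Nm Nf a bm bs -> optimal_alloc obj2 B BS0 R0 lam Nm Nf a bm bs.
Proof.
  intros Hc E [[Hf [pm [ps [Hp [Hq [Hmc Hmax]]]]]] Hu].
  assert (Hd : forall u v, u <= v -> u / c <= v / c).
  { intros. unfold Rdiv. apply Rmult_le_compat_r; [left; apply Rinv_0_lt_compat|]; auto. }
  assert (Hd' : forall u v, u / c <= v / c -> u <= v).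
  { intros u v h. apply (Rmult_le_compat_r c) in h; [|lra]. unfold Rdiv in h.
    rewrite !Rmult_assoc, !Rinv_l in h by lra. lra. }
  split.
  - split; auto. exists pm, ps. do 3 (split; auto). intros.
    rewrite !E by auto. apply Hd. apply Hmax; auto.
  - intros bm1 bs1 pm1 ps1 Hf1 Hp1 Hq1 Hmax1. apply Hu; auto.
    intros. apply Hd'. rewrite <- !E by auto. apply Hmax1; auto.
Qed.

Lemma loss obj B BS0 R0 lam Nm Nf a bm bs : 0 <= BS0 -> bs < BS0 ->
  optimal_alloc obj B 0 R0 lam Nm Nf a bm bs -> strict_loss obj B BS0.
Proof.
  intros H0 Hlt [[Hf [pm [ps [Hp [Hq [_ Hmax]]]]]] Hu].
  exists bm, bs, pm, ps. do 3 (split; auto).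
  intros x y p q Hf' Hp' Hq'.
  assert (Hf0 : feasible B 0 x y) by (unfold feasible in *; lra).
  destruct (Rlt_or_le (obj x y p q) (obj bm bs pm ps)) as [h|h]; auto.
  exfalso.
  destruct (Hu x y p q Hf0 Hp' Hq') as [_ [Hy _]].
  - intros. apply Rle_trans with (obj bm bs pm ps); auto.
  - unfold feasible in Hf'. lra.
Qed.

Lemma nu_dec a r1 r2 : 0 < a -> 0 < r1 -> r1 < r2 -> nu a r2 < nu a r1.
Proof. apply price_lt. Qed.

Theorem theorem1 (B BS0 R0 lam Nm Nf alpha : R)
  (Halpha0 : 0 < alpha) (Halpha1 : alpha < 1) (Hlam : 1 < lam)
  (HR0 : 0 < R0) (HNm : 0 < Nm) (HNf : 0 < Nf)
  (HBS0 : 0 <= BS0) (HBS0B : BS0 < B) :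
  let k := Nf * Rpower lam (/ alpha - 1) in
  let BSu := k * B / (k + Nm) in
  let BMu := Nm * B / (k + Nm) in
  let rev := revenue R0 lam Nm Nf alpha in
  let sw := welfare R0 lam Nm Nf alpha in
  (BS0 <= BSu ->
     optimal_alloc rev B BS0 R0 lam Nm Nf alpha BMu BSu /\
     optimal_alloc sw B BS0 R0 lam Nm Nf alpha BMu BSu) /\
  (BSu < BS0 ->
     optimal_alloc rev B BS0 R0 lam Nm Nf alpha (B - BS0) BS0 /\
     optimal_alloc sw B BS0 R0 lam Nm Nf alpha (B - BS0) BS0 /\
     strict_loss sw B BS0 /\ strict_loss rev B BS0).
Proof.
  intros k BSu BMu rev sw.
  assert (Ha : 0 < alpha < 1) by lra.
  set (L := Rpower lam (/ alpha - 1)) in *.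
  assert (HlnL : ln L = (/alpha - 1) * ln lam) by (unfold L, Rpower; apply ln_exp).
  assert (Hlnlam : 0 < ln lam) by (rewrite <- ln_1; apply ln_increasing; lra).
  assert (Hinv : 1 < / alpha).
  { apply (Rmult_lt_reg_l alpha); auto. rewrite Rinv_r by lra. lra. }
  assert (HL : 1 <= L).
  { unfold L, Rpower. assert (P : 0 < (/alpha - 1) * ln lam) by (apply Rmult_lt_0_compat; lra).
    pose proof (exp_increasing _ _ P) as Q. rewrite exp_0 in Q. lra. }
  assert (Hk : 0 < k) by (unfold k; nra).
  set (S := k + Nm).
  assert (HS : 0 < S) by (unfold S; lra).
  assert (HB : 0 < B) by lra.
  set (rho := R0 * B / S).
  assert (Erho : rho * S = R0 * B) by (unfold rho; field; lra).
  assert (Hrho : 0 < rho) by (unfold rho; unfold Rdiv; apply Rmult_lt_0_compat; [nra|apply Rinv_0_lt_compat; lra]).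
  assert (EBSu : BSu * S = k * B) by (unfold BSu, S; field; lra).
  assert (EBMu : BMu * S = Nm * B) by (unfold BMu, S; field; lra).
  assert (HBSu : 0 < BSu) by nra.
  assert (HBMu : 0 < BMu) by nra.
  assert (Hsum : BMu + BSu = B).
  { apply (Rmult_eq_reg_r S); [|lra]. rewrite Rmult_plus_distr_r, EBSu, EBMu. unfold S; ring. }
  assert (HlL : 1 < lam * L) by nra.
  assert (Hr2 : rho < lam * L * rho) by nra.
  assert (Hnueq : nu alpha rho = lam * nu alpha (lam * L * rho)).
  { unfold nu. rewrite <- (exp_ln lam) at 1 by lra. rewrite <- exp_plus.
    rewrite !ln_mult by nra. rewrite HlnL. f_equal. field. lra. }
  assert (Hopt0 : forall B0, 0 <= B0 -> B0 <= BSu ->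
            optimal_alloc rev B B0 R0 lam Nm Nf alpha BMu BSu).
  { intros B0 h1 h2. apply (core_opt B B0 R0 lam Nm Nf alpha BMu BSu rho (lam * L * rho)); auto; try lra.
    - apply (Rmult_eq_reg_r S); [|lra]. replace (rho * Nm * S) with (rho * S * Nm) by ring.
      rewrite Erho. replace (R0 * BMu * S) with (R0 * (BMu * S)) by ring. rewrite EBMu. ring.
    - apply (Rmult_eq_reg_r S); [|lra]. replace (lam * L * rho * Nf * S) with (lam * (rho * S) * (Nf * L)) by ring.
      rewrite Erho. replace (lam * R0 * BSu * S) with (lam * R0 * (BSu * S)) by ring. rewrite EBSu.
      unfold k. fold L. ring. }
  assert (Hc : 0 < 1 - alpha) by lra.
  assert (Esw : forall x y p q, 0 < p -> 0 < q -> sw x y p q = rev x y p q / (1 - alpha)).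
  { intros. unfold sw, rev. apply welfare_rev; auto. }
  split.
  - intros h. split; [apply Hopt0; auto|]. apply (transfer rev sw (1 - alpha)); auto.
  - intros h.
    assert (HrM : 0 < R0 * (B - BS0) / Nm).
    { unfold Rdiv. apply Rmult_lt_0_compat; [nra|apply Rinv_0_lt_compat; lra]. }
    set (rM := R0 * (B - BS0) / Nm) in *.
    set (rS := lam * R0 * BS0 / Nf).
    assert (ErM : rM * Nm = R0 * (B - BS0)) by (unfold rM; field; lra).
    assert (ErS : rS * Nf = lam * R0 * BS0) by (unfold rS; field; lra).
    assert (H1 : rM < rho).
    { apply (Rmult_lt_reg_r (Nm * S)); [nra|].
      replace (rM * (Nm * S)) with (rM * Nm * S) by ring. rewrite ErM.
      replace (rho * (Nm * S)) with (rho * S * Nm) by ring. rewrite Erho.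
      assert (BSu * S < BS0 * S) by nra.
      unfold S in *. nra. }
    assert (H2 : lam * L * rho < rS).
    { apply (Rmult_lt_reg_r (Nf * S)); [nra|].
      replace (rS * (Nf * S)) with (rS * Nf * S) by ring. rewrite ErS.
      replace (lam * L * rho * (Nf * S)) with (lam * (rho * S) * (Nf * L)) by ring. rewrite Erho.
      assert (BSu * S < BS0 * S) by nra. fold k.
      replace (lam * (R0 * B) * k) with (lam * R0 * (k * B)) by ring. rewrite <- EBSu.
      assert (0 < lam * R0) by nra. nra. }
    assert (Hc1 : optimal_alloc rev B BS0 R0 lam Nm Nf alpha (B - BS0) BS0).
    { apply (core_opt B BS0 R0 lam Nm Nf alpha (B - BS0) BS0 rM rS); auto; try lra.
      - pose proof (nu_dec alpha rM rho Halpha0 HrM H1).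
        pose proof (nu_dec alpha (lam * L * rho) rS Halpha0 ltac:(nra) H2). nra. }
    assert (Hu0 := Hopt0 0 ltac:(lra) ltac:(lra)).
    split; [auto|]. split; [apply (transfer rev sw (1 - alpha)); auto|].
    split.
    + apply (loss sw B BS0 R0 lam Nm Nf alpha BMu BSu); auto.
      apply (transfer rev sw (1 - alpha)); auto.
    + apply (loss rev B BS0 R0 lam Nm Nf alpha BMu BSu); auto.
Qed.
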